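(* Suppose $\mathcal Y$ is finite-dimensional and $c_{00}(\mathcal Z)\subseteq\underline{\mathcal Z}$. Let $H:\underline{\mathcal Z}\to\mathcal Y$ be a linear functional. (i) $H$ has the product FMP if and only if it has finite memory. (ii) If $\underline{\mathcal Z}=\mathcal Z^{\mathbb Z_-}$, then the following are equivalent: $H$ has the product FMP; $H$ has finite memory; $H$ has the minimal FMP and is minimally continuous.
   Context: Let $(\mathcal Z,\|\cdot\|)$ and $(\mathcal Y,\|\cdot\|_{\mathcal Y})$ be normed vector spaces over $\mathbb R$ and $\mathcal B=\{z\in\mathcal Z:\|z\|\le1\}$. Let $\mathbb Z_-=\{0,-1,-2,\dots\}$; elements of $\mathcal Z^{\mathbb Z_-}$ are sequences $\underline z=(z_t)_{t\le0}$. For $t\in\mathbb Z_-$, $\delta^t:\mathcal Z\to\mathcal Z^{\mathbb Z_-}$ maps $z$ to the sequence whose entry at time $t$ is $z$ and all other entries are $0$. Standing assumption: $\underline{\mathcal Z}\subseteq\mathcal Z^{\mathbb Z_-}$ is a set such that (a) $\underline{\mathcal Z}$ is convex and $\underline{\mathcal Z}=\{-\underline z:\underline z\in\underline{\mathcal Z}\}$; (b) $\delta^t(\mathcal B)\subseteq\underline{\mathcal Z}$ for all $t\in\mathbb Z_-$; (c) for every $\underline z\in\underline{\mathcal Z}$ and every $J\subseteq\mathbb Z_-$, the sequence $\sum_{t\in J}\delta^t(z_t)$ (equal to $z_t$ at times $t\in J$ and $0$ elsewhere) belongs to $\underline{\mathcal Z}$. A functional $H:\underline{\mathcal Z}\to\mathcal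 Y$ is linear if it is the restriction of a linear map defined on the linear span of $\underline{\mathcal Z}$. $c_{00}(\mathcal Z)$ is the set of sequences in $\mathcal Z^{\mathbb Z_-}$ with at most finitely many non-zero entries. $L(\mathcal Z,\mathcal Y)$ is the space of continuous linear maps $\mathcal Z\to\mathcal Y$. $H$ has a formal convolution representation if there is $\underline\kappa\in L(\mathcal Z,\mathcal Y)^{\mathbb Z_-}$ with $H(\underline z)=\lim_{T\to-\infty}\sum_{t=T}^0\kappa_t(z_t)$ for all $\underline z\in\underline{\mathcal Z}$ (such $\underline\kappa$ is unique). $H$ has finite memory if it has a formal convolution representation $\underline\kappa$ with $\kappa_t=0$ for all but at most finitely many $t\in\mathbb Z_-$. $H$ has the product fading memory property (product FMP) if it is continuous with respect to the subspace topology on $\underline{\mathcal Z}$ induced by the product topology on $\mathcal Z^{\mathbb Z_-}$ (each factor carrying the norm topology). $H$ is minimally continuous if $H\circ\delta^t:\mathcal B\to\mathcal Y$ is continuous for every $t\in\mathbb Z_-$. $H$ has the minimal fading memory property (minimal FMP) if $H(\sum_{t=T}^0\delta^t(z_t))\to H(\underline z)$ as $T\to-\infty$ for every $\underline z\in\underline{\mathcal Z}$. *)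

(* Defs.v *)
From HB Require Import structures.
From mathcomp Require Import all_boot all_order all_algebra.
From mathcomp Require Import all_classical all_reals all_analysis.
Set Implicit Arguments. Unset Strict Implicit. Unset Printing Implicit Defensive.
Import Order.TTheory GRing.Theory Num.Theory.
Import numFieldNormedType.Exports.
Local Open Scope classical_set_scope.
Local Open Scope ring_scope.

(* Convention: a left-infinite sequence (z_t)_{t <= 0} in Z^{Z_-} is
   represented as  z : nat -> Z  with  z n = z_{-n}. *)

Section Defs.
Context {R : realType} {Z Y : normedModType R}.

Definition delta (t : nat) (z : Z) : nat -> Z :=
  fun s => if s == t then z else 0.

Definition restrict_seq (J : pred nat) (z : nat -> Z) : nat -> Z :=
  fun s => if J s then z s else 0.

Definition trunc (T : nat) (z : nat -> Z) : nat -> Z :=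
  restrict_seq (fun s => (s <= T)%N) z.

Definition unit_ball : set Z := [set z | `|z| <= 1].

Definition standing_assumption (Zset : set (nat -> Z)) : Prop :=
  [/\ (forall u v (l : R), Zset u -> Zset v -> 0 <= l -> l <= 1 ->
          Zset (fun s => l *: u s + (1 - l) *: v s)),
      Zset = [set u | Zset (fun s => - u s)],
      (forall t z, unit_ball z -> Zset (delta t z)) &
      (forall z (J : pred nat), Zset z -> Zset (restrict_seq J z))].

Definition c00 : set (nat -> Z) :=
  [set z | exists N : nat, forall t, (N <= t)%N -> z t = 0].

Definition lin_span (Zset : set (nat -> Z)) : set (nat -> Z) :=
  [set u | exists (n : nat) (a : 'I_n -> R) (w : 'I_n -> nat -> Z),
      (forall i, Zset (w i)) /\ u = (fun s => \sum_(i < n) a i *: w i s)].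

Definition linear_on (Zset : set (nat -> Z)) (H : (nat -> Z) -> Y) : Prop :=
  exists L : (nat -> Z) -> Y,
    (forall u v (a b : R), lin_span Zset u -> lin_span Zset v ->
        L (fun s => a *: u s + b *: v s) = a *: L u + b *: L v) /\
    (forall z, Zset z -> L z = H z).

Definition cont_linear (k : Z -> Y) : Prop :=
  (forall (a b : R) (x y : Z), k (a *: x + b *: y) = a *: k x + b *: k y) /\
  continuous k.

Definition conv_rep (Zset : set (nat -> Z)) (H : (nat -> Z) -> Y)
    (kappa : nat -> Z -> Y) : Prop :=
  (forall t, cont_linear (kappa t)) /\
  (forall z, Zset z ->
     (fun T : nat => \sum_(t < T.+1) kappa t (z t)) @ \oo --> H z).

Definition finite_memory (Zset : set (nat -> Z)) (H : (nat -> Z) -> Y) : Prop :=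
  exists kappa : nat -> Z -> Y, conv_rep Zset H kappa /\
    exists N : nat, forall t, (N <= t)%N -> kappa t = (fun _ => 0).

Definition product_FMP (Zset : set (nat -> Z)) (H : (nat -> Z) -> Y) : Prop :=
  {within (Zset : set {ptws nat -> Z}), continuous (H : {ptws nat -> Z} -> Y)}.

Definition minimally_continuous (H : (nat -> Z) -> Y) : Prop :=
  forall t : nat, {within unit_ball, continuous (fun z => H (delta t z))}.

Definition minimal_FMP (Zset : set (nat -> Z)) (H : (nat -> Z) -> Y) : Prop :=
  forall z, Zset z -> (fun T : nat => H (trunc T z)) @ \oo --> H z.

End Defs.

Definition finite_dimensional {R : realType} (Y : normedModType R) : Prop :=
  exists (n : nat) (e : 'I_n -> Y),
    forall y : Y, exists a : 'I_n -> R, y = \sum_(i < n) a i *: e i.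

(* Main.v *)
Require Import Defs.
From mathcomp Require Import all_boot all_order all_algebra.
From mathcomp Require Import all_classical all_reals all_analysis.
Import Order.TTheory GRing.Theory Num.Theory.
Import numFieldNormedType.Exports.
Local Open Scope classical_set_scope.
Local Open Scope ring_scope.

Section Aux.
Context {R : realType} {Z Y : normedModType R}.
Variable Zset : set (nat -> Z).
Variable H : (nat -> Z) -> Y.
Local Notation c00 := (@c00 R Z).
Local Notation delta := (@delta R Z).
Local Notation trunc := (@trunc R Z).
Hypothesis hsa : standing_assumption Zset.
Hypothesis hc00 : c00 `<=` Zset.
Hypothesis hlin : linear_on Zset H.

Lemma Zset_span z : Zset z -> lin_span Zset z.
Proof.
move=> Zz; exists 1%N, (fun _ => 1), (fun _ => z); split => //.
by apply/funext => s; rewrite big_ord1 scale1r.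
Qed.

Lemma H_lin u v w (a b : R) : Zset u -> Zset v -> Zset w ->
  w = (fun s => a *: u s + b *: v s) -> H w = a *: H u + b *: H v.
Proof.
case: hlin => L [LL LH] Zu Zv Zw Ew; subst w.
by rewrite -LH // (LL u v a b) ?LH //; apply: Zset_span.
Qed.

Lemma c00_delta t x : c00 (delta t x).
Proof. by exists t.+1 => s; rewrite /delta; case: eqP => // ->; rewrite ltnn. Qed.

Lemma c00_0 : c00 (fun _ : nat => (0 : Z)).
Proof. by exists 0%N. Qed.

Lemma c00_trunc T z : c00 (trunc T z).
Proof. by exists T.+1 => s hs; rewrite /trunc /restrict_seq ifN // -ltnNge. Qed.

Lemma Zdelta t x : Zset (delta t x). Proof. exact: hc00 _ (c00_delta t x). Qed.
Lemma Ztrunc T z : Zset (trunc T z). Proof. exact: hc00 _ (c00_trunc T z). Qed.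
Lemma Z0 : Zset (fun _ => 0). Proof. exact: hc00 _ c00_0. Qed.

Lemma H0 : H (fun _ => 0) = 0.
Proof.
have E : (fun _ : nat => (0:Z)) = (fun s => (0:R) *: (0:Z) + (0:R) *: 0).
  by apply/funext => s; rewrite scale0r addr0.
by rewrite (@H_lin _ _ _ 0 0 Z0 Z0 Z0 E) !scale0r addr0.
Qed.

Definition kap t (x : Z) : Y := H (delta t x).

Lemma kap_lin t : cont_linear (kap t) <-> continuous (kap t).
Proof.
split => [[]//|c]; split => // a b x y; rewrite /kap.
apply: H_lin; try exact: Zdelta.
by apply/funext => s; rewrite /delta; case: eqP => //; rewrite !scaler0 addr0.
Qed.

Lemma trunc_sum T z : H (trunc T z) = \sum_(t < T.+1) kap t (z t).
Proof.
elim: T => [|T IH].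
  rewrite big_ord1 /kap; congr H; apply/funext => s.
  by rewrite /trunc /restrict_seq /delta leqn0; case: eqP => [->|].
rewrite big_ord_recr /= -IH /kap.
rewrite -(scale1r (H (trunc T z))) -(scale1r (H (delta _ _))).
apply: H_lin; try exact: Zdelta; try exact: Ztrunc.
apply/funext => s; rewrite !scale1r /trunc /restrict_seq /delta.
rewrite leq_eqVlt ltnS; case: eqP => [->|]; first by rewrite ltnn add0r.
by case: ifP; rewrite addr0.
Qed.


Lemma kapD t u v : kap t (u + v) = kap t u + kap t v.
Proof.
rewrite /kap -(scale1r (H (delta t u))) -(scale1r (H (delta t v))).
apply: H_lin; try exact: Zdelta.
by apply/funext => s; rewrite /delta !scale1r; case: eqP; rewrite ?addr0.
Qed.

Lemma kapZ t c u : kap t (c *: u) = c *: kap t u.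
Proof.
rewrite /kap -[RHS]addr0 -[X in _ + X](scale0r (H (delta t u))).
apply: H_lin; try exact: Zdelta.
by apply/funext => s; rewrite /delta scale0r addr0; case: eqP; rewrite ?scaler0.
Qed.

Lemma sum_cut (f : nat -> Y) N T : (forall t, (N <= t)%N -> f t = 0) ->
  (N <= T.+1)%N -> \sum_(t < T.+1) f t = \sum_(t < N) f t.
Proof.
move=> hf hN; rewrite -(subnKC hN) big_split_ord /= [X in _ + X]big1 ?addr0 //.
by move=> i _; apply: hf; rewrite /= leq_addr.
Qed.

Lemma within_seq {T : Type} (F : set_system T) {FF : Filter F}
    (g : T -> nat -> Z) (y : nat -> Z) :
  product_FMP Zset H -> Zset y -> (forall x, Zset (g x)) ->
  (g @ F --> (y : {ptws nat -> Z})) -> (fun x => H (g x)) @ F --> H y.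
Proof.
move=> PF Zy Zg gy.
have /subspace_continuousP /(_ y Zy) Hc := PF.
apply: (@cvg_comp _ _ _ g H _ (within Zset (nbhs (y : {ptws nat -> Z})))) => //.
move=> W /gy; rewrite !nbhs_simpl /=; apply: (@filterS _ _ _ (fun t => Zset (g t) -> W (g t))) => t /=; apply; exact: Zg.
Qed.

Lemma eval_cvg (x : {ptws nat -> Z}) s :
  (fun g : {ptws nat -> Z} => g s) @ nbhs x --> x s.
Proof. by move: s; apply/pointwise_cvgP; exact: cvg_id. Qed.

Lemma zz_ex : exists zz : nat -> Z, forall t, (exists y, kap t y != 0) ->
  `|kap t (zz t)| = 1.
Proof.
have /choice [zz hzz] : forall t, exists x : Z,
    (exists y, kap t y != 0) -> `|kap t x| = 1.
  move=> t; case: (pselect (exists y, kap t y != 0)) => [[y ky]|n]; last first.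
    by exists 0 => /n.
  exists (`|kap t y|^-1 *: y) => _; by rewrite kapZ normfZV.
by exists zz.
Qed.

Lemma PF_FM : product_FMP Zset H -> finite_memory Zset H.
Proof.
move=> PF.
have kc t : continuous (kap t).
  move=> x; apply: (@within_seq _ (nbhs x) _ (delta t)) => //; try solve [exact: Zdelta | move=> ?; exact: Zdelta].
  apply/pointwise_cvgP => s.
  change ((fun y => delta t y s) @ nbhs x --> delta t x s).
  by rewrite /delta; case: eqP => _; [exact: cvg_id | exact: cvg_cst].
have conv z : Zset z -> (fun T => \sum_(t < T.+1) kap t (z t)) @ \oo --> H z.
  move=> Zz; under eq_fun do rewrite -trunc_sum.
  apply: (@within_seq _ _ _ (fun T => trunc T z)) => //; try solve [move=> ?; exact: Ztrunc].
  apply/pointwise_cvgP => s.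
  change ((fun T => trunc T z s) @ \oo --> z s).
  apply: cvg_near_cst; exists s => // T /= hT.
  by rewrite /trunc /restrict_seq hT.
have [zz hzz] := zz_ex.
have lim0 : (fun t => kap t (zz t)) @ \oo --> 0.
  rewrite -H0; apply: (@within_seq _ _ _ (fun t => delta t (zz t))) => //.
  - exact: Z0.
  - by move=> ?; exact: Zdelta.
  apply/pointwise_cvgP => s.
  change ((fun t => delta t (zz t) s) @ \oo --> 0).
  apply: cvg_near_cst; exists s.+1 => // t /= ht.
  by rewrite /delta ifN // ltn_eqF.
have /cvgr0Pnorm_lt /(_ 1 ltr01) [N _ hN] := lim0.
exists kap; split; first by split => // t; exact/kap_lin.
exists N => t /hN /= ht; apply/funext => x.
case: (pselect (exists y, kap t y != 0)) => [ex|nex].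
  by move: ht; rewrite (hzz t ex) ltxx.
by apply/eqP; apply: contra_notT nex => kx; exists x.
Qed.


Lemma conv_kap kappa : conv_rep Zset H kappa -> kappa = kap.
Proof.
case=> kl kc; apply/funext => t; apply/funext => x.
have k0 s : kappa s 0 = 0.
  have [kls _] := kl s.
  by have := kls 0 0 0 0; rewrite !scale0r !addr0.
apply/esym; apply: (norm_cvg_unique (kc _ (Zdelta t x))).
apply: cvg_near_cst; exists t => // T /= hT.
rewrite (eq_bigr (fun s : 'I_T.+1 => if (s == t :> nat) then kappa t x else 0)).
  by rewrite -big_mkcond (big_ord1_eq _ (fun=> kappa t x)) ltnS hT.
by move=> s _; rewrite /delta; case: eqP => [->|].
Qed.

Lemma FM_eq kappa N : conv_rep Zset H kappa ->
  (forall t, (N <= t)%N -> kappa t = (fun _ => 0)) ->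
  forall z, Zset z -> H z = \sum_(t < N) kappa t (z t).
Proof.
move=> [_ kc] hN z Zz.
apply: (norm_cvg_unique (kc _ Zz)).
apply: cvg_near_cst; exists N.-1 => // T /= hT.
apply: (@sum_cut (fun t => kappa t (z t))) => [t /hN -> //|].
by clear hN; case: N hT.
Qed.

Lemma FM_PF : finite_memory Zset H -> product_FMP Zset H.
Proof.
move=> [kappa [kr [N hN]]].
have kk := conv_kap _ kr.
have kc t : continuous (kappa t) by case: kr => /(_ t) [].
have Gc : forall M (x : {ptws nat -> Z}),
    (fun z : {ptws nat -> Z} => \sum_(t < M) kappa t (z t)) @ nbhs x -->
    \sum_(t < M) kappa t (x t).
  elim => [|n IH] x.
    by apply: cvg_near_cst; apply: nearW => z; rewrite !big_ord0.
  apply: (@cvg_trans _ ((fun z : {ptws nat -> Z} =>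
     \sum_(t < n) kappa t (z t) + kappa n (z n)) @ nbhs x)).
    by apply: near_eq_cvg; apply: nearW => z; rewrite big_ord_recr.
  rewrite big_ord_recr /=.
  apply: cvgD; first exact: IH.
  apply: (@cvg_comp _ _ _ (fun g : {ptws nat -> Z} => g n) (kappa n) _ (nbhs (x n))).
    exact: eval_cvg.
  exact: kc.
pose G := fun z : {ptws nat -> Z} => \sum_(t < N) kappa t (z t).
rewrite /product_FMP.
apply: (@subspace_eq_continuous {ptws nat -> Z} Zset Y (from_subspace Zset G)).
  by move=> z /set_mem Zz; rewrite /from_subspace (@FM_eq kappa N kr hN z Zz).
apply: continuous_subspaceT; exact: Gc.
Qed.

Lemma FM_MF : finite_memory Zset H -> minimal_FMP Zset H /\ minimally_continuous H.
Proof.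
move=> [kappa [kr [N hN]]].
have kk := conv_kap _ kr. subst kappa.
split.
  move=> z Zz; under eq_fun do rewrite trunc_sum; exact: kr.2.
move=> t; apply: continuous_subspaceT.
by case: kr => /(_ t) [].
Qed.


Lemma MF_FM : Zset = setT -> minimal_FMP Zset H -> minimally_continuous H ->
  finite_memory Zset H.
Proof.
move=> ZT MF MC.
have kc t : continuous (kap t).
  have k0 : kap t 0 = 0 by rewrite -(scale0r (0:Z)) kapZ scale0r.
  have c0 : kap t @ nbhs 0 --> 0.
    have ball0 : unit_ball (0 : Z) by rewrite /unit_ball /= normr0 ler01.
    have /subspace_continuousP /(_ 0 ball0) := MC t.
    rewrite within_interior; first by rewrite /from_subspace -/(kap t 0) k0.
    apply: filterS (nbhsx_ballx (0:Z) 1 ltr01) => y.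
    by rewrite -ball_normE /ball_ /= sub0r normrN => /ltW.
  move=> x.
  have h1 : (fun y => kap t (y - x)) @ nbhs x --> 0.
    apply: (@cvg_comp _ _ _ (fun y => y - x) (kap t) _ (nbhs 0)) => //.
    rewrite -(subrr x); apply: cvgB; [exact: cvg_id | exact: cvg_cst].
  have h2 : (fun y => kap t (y - x) + kap t x) @ nbhs x --> 0 + kap t x.
    by apply: cvgD => //; exact: cvg_cst.
  rewrite add0r in h2; rewrite /continuous_at.
  apply: (cvg_trans _ h2); apply: near_eq_cvg; apply: nearW => y /=.
  by rewrite -kapD subrK.
have conv z : Zset z -> (fun T => \sum_(t < T.+1) kap t (z t)) @ \oo --> H z.
  move=> Zz; under eq_fun do rewrite -trunc_sum.
  exact: MF.
have [zz hzz] := zz_ex.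
pose S T := \sum_(t < T.+1) kap t (zz t).
have h1 : S @ \oo --> H zz by apply: conv; rewrite ZT.
have h2 : (fun T => S T.+1) @ \oo --> H zz by rewrite cvg_shiftS.
have h3 : (fun T => S T.+1 - S T) @ \oo --> H zz - H zz by apply: cvgB.
rewrite subrr in h3.
have lim0 : (fun T => kap T.+1 (zz T.+1)) @ \oo --> 0.
  apply: (cvg_trans _ h3); apply: near_eq_cvg; apply: nearW => T /=.
  by rewrite /S big_ord_recr /= addrAC subrr add0r.
have /cvgr0Pnorm_lt /(_ 1 ltr01) [N _ hN] := lim0.
exists kap; split; first by split => // t; exact/kap_lin.
exists N.+1 => -[//|t] ht; apply/funext => x.
have {ht} ht := hN t ht.
case: (pselect (exists y, kap t.+1 y != 0)) => [ex|nex].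
  by move: ht; rewrite /= (hzz t.+1 ex) ltxx.
by apply/eqP; apply: contra_notT nex => kx; exists x.
Qed.

End Aux.

Theorem proposition3p13 (R : realType) (Z Y : normedModType R)
    (Zset : set (nat -> Z)) (H : (nat -> Z) -> Y) :
  standing_assumption Zset ->
  finite_dimensional Y ->
  c00 `<=` Zset ->
  linear_on Zset H ->
  (product_FMP Zset H <-> finite_memory Zset H) /\
  (Zset = setT ->
     (product_FMP Zset H <-> finite_memory Zset H) /\
     (finite_memory Zset H <-> minimal_FMP Zset H /\ minimally_continuous H)).
Proof.
move=> _ _ hc hl.
have e1 : product_FMP Zset H <-> finite_memory Zset H.
  by split; [exact: PF_FM | exact: FM_PF].
split => // ZT; split => //; split; first exact: FM_MF.
by case; exact: MF_FM.
Qed.
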